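(* (Model B) Let $u\in\mathbb{R}^d$. For all sufficiently small $\beta>0$, every finite $\Lambda\subset\mathbb{Z}^d$ and every $\omega$ for which the bounds $As^2-B^\omega_{(x,y)}\le V^\omega_{(x,y)}(s)\le C_2s^2$ hold, $$F_{\beta,u,\Lambda}[\omega_\Lambda]\le-|\Lambda|\big(\sigma^{A-\beta}_\Lambda-\sigma^{C_2}_\Lambda\big)+\sum_{x,y\in\Lambda\cup\partial\Lambda,|x-y|=1}B^\omega_{(x,y)}-\frac{A-\beta-C_2}{2}\sum_{x,y\in\Lambda\cup\partial\Lambda,|x-y|=1}((x-y)\cdot u)^2.$$
   Context: Model B: for each nearest-neighbour bond $(x,y)$ of $\mathbb{Z}^d$ there is a random function $V^\omega_{(x,y)}:\mathbb{R}\to\mathbb{R}$, jointly measurable in $(\omega,s)$, i.i.d. over bonds, and for each $\omega$, $V^\omega_{(x,y)}\in C^2(\mathbb{R})$ is even. $(B^\omega_{(x,y)})$ are i.i.d. real random variables with $\mathbb{E}|B_{(x,y)}|<\infty$, and for $\mathbb P$-a.e. $\omega$, $As^2-B^\omega_{(x,y)}\le V^\omega_{(x,y)}(s)\le C_2s^2$ for all $s$ and all bonds (fixed $A,C_2>0$). For finite $\Lambda$, $\partial\Lambda=\{x\notin\Lambda:\|x-y\|_1=1\text{ for some }y\in\Lambda\}$; sums over ''$x,y$ with $|x-y|=1$'' are over ordered nearest-neighbour pairs. For $\psi\in\mathbb{R}^{\mathbb{Z}^d}$, $H^\psi_\Lambda[\omega](\phi)=\frac12\sum_{x,y\in\Lambda,|x-y|=1}V^\omega_{(x,y)}(\phi(x)-\phi(y))+\sum_{x\in\Lambda,y\in\partial\Lambda,|x-y|=1}V^\omega_{(x,y)}(\phi(x)-\psi(y))$,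 and $\nu^\psi_\Lambda[\omega](\mathrm{d}\phi)=\frac1Ze^{-H^\psi_\Lambda[\omega](\phi)}\prod_{x\in\Lambda}\mathrm{d}\phi(x)\prod_{x\notin\Lambda}\delta_{\psi(x)}(\mathrm{d}\phi(x))$. With $\psi_u(x)=x\cdot u$, $$F_{\beta,u,\Lambda}[\omega_\Lambda]=\log\int\nu^{\psi_u}_\Lambda[\omega](\mathrm{d}\phi)\exp\Big(\frac\beta2\sum_{x,y\in\mathbb{Z}^d,|x-y|=1}(\phi(x)-\phi(y)-u\cdot(x-y))^2\Big).$$ For $c>0$, $\sigma^c_\Lambda=-\frac1{|\Lambda|}\log\int_{\mathbb{R}^\Lambda}\exp\big(-\frac c2\sum_{x,y\in\Lambda,|x-y|=1}(\phi(x)-\phi(y))^2-c\sum_{x\in\Lambda,y\in\partial\Lambda,|x-y|=1}\phi(x)^2\big)\prod_{x\in\Lambda}\mathrm{d}\phi(x)$ (the surface tension of the nonrandom model with potential $V(s)=cs^2$, tilt $0$). *)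

(* Defs.v *)
From HB Require Import structures.
From mathcomp Require Import all_boot all_order all_algebra finmap.
From mathcomp Require Import all_classical all_reals all_analysis.

Set Implicit Arguments.
Unset Strict Implicit.
Unset Printing Implicit Defensive.

Import Order.TTheory GRing.Theory Num.Theory.
Import numFieldNormedType.Exports.
Local Open Scope ring_scope.

(* Sites of Z^d are integer row vectors; x 0 i is the i-th coordinate. *)
Definition site (d : nat) := 'rV[int]_d.

Definition nn (d : nat) (x y : site d) : bool :=
  (\sum_(i < d) `|x ord0 i - y ord0 i|%N)%N == 1%N.

Definition dotZ (R : realType) (d : nat) (x : site d) (u : 'rV[R]_d) : R :=
  \sum_(i < d) (x 0 i)%:~R * u 0 i.

Definition nbrs (d : nat) (x : site d) : seq (site d) :=
  [seq x + delta_mx 0 i | i <- enum 'I_d] ++ [seq x - delta_mx 0 i | i <- enum 'I_d].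

(* outer boundary  dL = { y notin L : ||y - x||_1 = 1 for some x in L } *)
Definition bdry (d : nat) (L : {fset site d}) : {fset site d} :=
  [fset y in flatten [seq nbrs x | x <- L] | (y \notin L) && has (nn y) L]%fset.

Definition clos (d : nat) (L : {fset site d}) : {fset site d} := (L `|` bdry L)%fset.

Definition upd (R : realType) (d : nat) (phi : site d -> R) (x : site d) (t : R) :
  site d -> R := fun y => if y == x then t else phi y.

(* For nonnegative integrands
   this is (Tonelli) the integral against prod_{x in s} dphi(x). *)
Fixpoint iint (R : realType) (d : nat) (s : seq (site d))
  (f : (site d -> R) -> \bar R) (phi : site d -> R) : \bar R :=
  match s with
  | [::] => f phi
  | x :: s' => (\int[@lebesgue_measure R]_t iint s' f (upd phi x t))%E
  end.

(* int prod_{x in L} dphi(x) prod_{x notin L} delta_{psi(x)}(dphi(x))  f(phi) *)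
Definition intL (R : realType) (d : nat) (L : {fset site d}) (psi : site d -> R)
  (f : (site d -> R) -> \bar R) : \bar R := iint (enum_fset L) f psi.

(* Hamiltonian H^psi_L[omega](phi); V x y is the potential of the bond {x,y} *)
Definition Ham (R : realType) (d : nat) (V : site d -> site d -> R -> R)
  (L : {fset site d}) (psi phi : site d -> R) : R :=
  2^-1 * (\sum_(x <- L) \sum_(y <- L | nn x y) V x y (phi x - phi y))
  + \sum_(x <- L) \sum_(y <- bdry L | nn x y) V x y (phi x - psi y).

Definition Zpart (R : realType) (d : nat) (V : site d -> site d -> R -> R)
  (L : {fset site d}) (psi : site d -> R) : \bar R :=
  intL L psi (fun phi => (expR (- Ham V L psi phi))%:E).

Definition gibbs (R : realType) (d : nat) (V : site d -> site d -> R -> R)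
  (L : {fset site d}) (psi : site d -> R) (g : (site d -> R) -> R) : \bar R :=
  intL L psi (fun phi => ((expR (- Ham V L psi phi) / fine (Zpart V L psi)) * g phi)%:E).

Definition psiu (R : realType) (d : nat) (u : 'rV[R]_d) : site d -> R :=
  fun x => dotZ x u.

Definition Ffree (R : realType) (d : nat) (beta : R) (u : 'rV[R]_d)
  (L : {fset site d}) (V : site d -> site d -> R -> R) : \bar R :=
  lne (gibbs V L (psiu u) (fun phi =>
    expR (beta / 2 * \sum_(x <- clos L) \sum_(y <- clos L | nn x y)
            (phi x - phi y - dotZ (x - y) u) ^+ 2))).

(* sigma^c_L, surface tension of V(s) = c s^2 at tilt 0 *)
Definition sigmaL (R : realType) (d : nat) (c : R) (L : {fset site d}) : R :=
  - (#|` L|%:R)^-1 * ln (fine (intL L (fun _ => 0) (fun phi =>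
      (expR (- (c / 2 * \sum_(x <- L) \sum_(y <- L | nn x y) (phi x - phi y) ^+ 2)
             - c * \sum_(x <- L) \sum_(y <- bdry L | nn x y) phi x ^+ 2))%:E))).

Definition isC2 (R : realType) (f : R -> R) : Prop :=
  (forall s, derivable f s 1) /\ (forall s, derivable (derive1 f) s 1) /\
  continuous (derive1n 2 f : R -> R).

Definition is_even (R : realType) (f : R -> R) : Prop := forall s, f (- s) = f s.

(* Main.v *)
Require Import Defs.
From HB Require Import structures.
From mathcomp Require Import all_boot all_order all_algebra finmap.
From mathcomp Require Import all_classical all_reals all_analysis.
From mathcomp Require Import measurable_realfun.
From mathcomp Require Import ring lra.
Import Order.TTheory GRing.Theory Num.Theory.
Import numFieldNormedType.Exports.
Import HBNNSimple.
Local Open Scope classical_set_scope.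
Local Open Scope ring_scope.
Section Aff.
Context {R : realType}.
Local Notation mu := (@lebesgue_measure R).
Variables (lam a : R).
Hypothesis lam0 : 0 < lam.
Definition aff (t : R) : R := lam * t + a.
Lemma measurable_aff : measurable_fun setT aff.
Proof. apply: continuous_measurable_fun => x; rewrite /aff.
by apply: continuousD; [apply: continuousM; [exact: cvg_cst|exact: cvg_id]|exact: cvg_cst]. Qed.
Let maff : @measurable_fun _ _ (measurableTypeR R) (measurableTypeR R) setT aff :=
  measurable_aff.
Let m1 : {measure set (measurableTypeR R) -> \bar R} := 
  (measure_function_pushforward__canonical__measure_function_Measure mu maff).
Let lamnn : {nonneg R} := NngNum (ltW lam0).
Let m2 : {measure set (measurableTypeR R) -> \bar R} := mscale lamnn m1.

Lemma aff_preimage_itv (x1 x2 : R) :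
  aff @^-1` `]x1, x2]%classic = `](x1 - a) / lam, (x2 - a) / lam]%classic.
Proof.
apply/seteqP; split => t /=; rewrite /aff !in_itv /=;
  by rewrite ltr_pdivrMr // ler_pdivlMr // ltrBlDr lerBrDr [t * _]mulrC.
Qed.

Lemma lebesgue_aff (S : set R) : measurable S -> mu S = (lam%:E * mu (aff @^-1` S))%E.
Proof.
move=> mS.
have := @lebesgue_measure_unique R m2 _ S mS; apply.
move=> _ [[x1 x2] _ <-].
have -> : m2 `]x1, x2]%classic = (lam%:E * mu (aff @^-1` `]x1, x2]%classic))%E by [].
rewrite aff_preimage_itv !lebesgue_measure_itv /=.
rewrite !lte_fin ltr_pM2r ?invr_gt0 // ltrD2r.
case: ifPn => _; last by rewrite mule0.
by rewrite -EFinB -EFinM; congr (_%:E); field; rewrite gt_eqF.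
Qed.

Definition affc (h : measurableTypeR R -> R) (t : measurableTypeR R) : R := h (aff t).
Section AffC.
Variable h : {nnsfun (measurableTypeR R) >-> R}.
Lemma affc_meas : @measurable_fun _ _ (measurableTypeR R) R setT (affc h).
Proof. exact: measurableT_comp (measurable_funPT h) maff. Qed.
HB.instance Definition _ := isMeasurableFun.Build _ _ _ _ (affc h) affc_meas.
Lemma affc_fin : finite_set (range (affc h)).
Proof. apply: sub_finite_set (fimfunP h) => _ [t _ <-]; by exists (aff t). Qed.
HB.instance Definition _ := FiniteImage.Build _ _ (affc h) affc_fin.
Lemma affc_ge0 t : 0 <= affc h t. Proof. exact: fun_ge0. Qed.
HB.instance Definition _ := isNonNegFun.Build _ _ (affc h) affc_ge0.
Definition affc_nnsfun : {nnsfun (measurableTypeR R) >-> R} := affc h.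

Lemma sintegral_affc : sintegral mu (affc h) = (lam^-1%:E * sintegral mu h)%E.
Proof.
have H0 : forall x, (0 <= x%:E * mu (h @^-1` [set x]))%E.
  by move=> x; exact: nnsfun_mulemu_ge0.
rewrite /sintegral (ge0_mule_fsumr _ _ H0).
apply: eq_fsbigr => x _.
have mP : measurable (h @^-1` [set x]) by exact: measurable_sfunP.
rewrite (lebesgue_aff _ mP) (muleCA x%:E) muleA -EFinM mulVf ?gt_eqF // mul1e.
done.
Qed.
End AffC.
End Aff.

Section OneD.
Context {R : realType}.
Local Notation mu := (@lebesgue_measure R).
Local Open Scope ereal_scope.

Lemma nnintE (f : R -> \bar R) : (forall x, 0 <= f x) ->
  \int[mu]_x f x = ereal_sup [set sintegral mu h | h in
     [set h : {nnsfun (measurableTypeR R) >-> R} | forall x, (h x)%:E <= f x]].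
Proof. by move=> f0; rewrite ge0_integralTE. Qed.

Lemma eK_l (k : R) (x : \bar R) : (0 < k)%R -> k^-1%:E * (k%:E * x) = x.
Proof. by move=> k0; rewrite muleA -EFinM mulVf ?gt_eqF // mul1e. Qed.
Lemma eK_r (k : R) (x : \bar R) : (0 < k)%R -> k%:E * (k^-1%:E * x) = x.
Proof. by move=> k0; rewrite muleA -EFinM mulfV ?gt_eqF // mul1e. Qed.

Lemma int_aff (f : R -> \bar R) (lam a : R) : (0 < lam)%R -> (forall x, 0 <= f x) ->
  \int[mu]_t f (lam * t + a)%R = (lam^-1)%:E * \int[mu]_t f t.
Proof.
move=> l0 f0.
have f0' : forall x, 0 <= f (lam * x + a)%R by [].
have li0 : (0 < lam^-1)%R by rewrite invr_gt0.
rewrite (nnintE _ f0) (nnintE _ f0').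
apply/eqP; rewrite eq_le; apply/andP; split.
- apply: ge_ereal_sup => _ [h hf <-].
  pose h' := affc_nnsfun (lam^-1) (- (a / lam)) h.
  have h'f : forall x, (h' x)%:E <= f x.
    move=> x; rewrite /h' /= /affc /aff.
    apply: (le_trans (hf _)); rewrite le_eqVlt; apply/orP; left; apply/eqP.
    by congr f; field; rewrite gt_eqF.
  have -> : sintegral mu h = lam^-1%:E * sintegral mu h'.
    by rewrite /h' (@sintegral_affc _ _ _ li0) invrK eK_l.
  apply: lee_wpmul2l; first by rewrite lee_fin ltW.
  by apply: ereal_sup_ubound; exists h'.
- rewrite -[X in _ <= X](@eK_l lam) //; apply: lee_wpmul2l; first by rewrite lee_fin ltW.
  apply: ge_ereal_sup => _ [h hf <-].
  pose h' := affc_nnsfun lam a h.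
  have h'f : forall x, (h' x)%:E <= f (lam * x + a)%R by move=> x; exact: hf.
  have -> : sintegral mu h = lam%:E * sintegral mu h'.
    by rewrite /h' (@sintegral_affc _ _ _ l0) eK_r.
  apply: lee_wpmul2l; first by rewrite lee_fin ltW.
  by apply: ereal_sup_ubound; exists h'.
Qed.

Lemma int_scale (f : R -> \bar R) (k : R) : (0 <= k)%R -> (forall x, 0 <= f x) ->
  \int[mu]_t (k%:E * f t) = k%:E * \int[mu]_t f t.
Proof.
move=> k0 f0.
have [->|kp] := eqVneq k 0%R.
  rewrite mul0e; under eq_integral do rewrite mul0e. by rewrite integral0.
have kgt : (0 < k)%R by rewrite lt_neqAle eq_sym kp.
have ki0 : (0 <= k^-1)%R by rewrite invr_ge0.
have f0' : forall x, 0 <= k%:E * f x by move=> x; rewrite mule_ge0 // lee_fin.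
rewrite (nnintE _ f0) (nnintE _ f0').
apply/eqP; rewrite eq_le; apply/andP; split.
- apply: ge_ereal_sup => _ [h hf <-].
  pose h' := scale_nnsfun h ki0.
  have h'f : forall x, (h' x)%:E <= f x.
    move=> x; rewrite /h' /= EFinM -(@eK_l k (f x)) //.
    by apply: lee_wpmul2l; rewrite ?lee_fin.
  have -> : sintegral mu h = k%:E * sintegral mu h'.
    by rewrite /h' sintegralrM eK_r.
  apply: lee_wpmul2l; first by rewrite lee_fin.
  by apply: ereal_sup_ubound; exists h'.
- rewrite -[X in _ <= X](@eK_r k) //; apply: lee_wpmul2l; first by rewrite lee_fin.
  apply: ge_ereal_sup => _ [h hf <-].
  pose h' := scale_nnsfun h k0.
  have h'f : forall x, (h' x)%:E <= k%:E * f x.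
    by move=> x; rewrite /h' /= EFinM; apply: lee_wpmul2l; rewrite ?lee_fin.
  have -> : sintegral mu h = k^-1%:E * sintegral mu h'.
    by rewrite /h' sintegralrM eK_l.
  apply: lee_wpmul2l; first by rewrite lee_fin.
  by apply: ereal_sup_ubound; exists h'.
Qed.

Lemma int_le (f g : R -> \bar R) : (forall x, 0 <= f x) -> (forall x, f x <= g x) ->
  \int[mu]_t f t <= \int[mu]_t g t.
Proof.
move=> f0 fg.
have g0 : forall x, 0 <= g x by move=> x; exact: le_trans (f0 x) (fg x).
rewrite (nnintE _ f0) (nnintE _ g0).
apply: ge_ereal_sup => _ [h hf <-]; apply: ereal_sup_ubound; exists h => //.
by move=> x; exact: le_trans (hf x) (fg x).
Qed.
End OneD.

Section Iint.
Context {R : realType} {d : nat}.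
Local Notation mu := (@lebesgue_measure R).
Local Open Scope ereal_scope.
Implicit Types (s : seq (site d)) (f g : (site d -> R) -> \bar R) (phi : site d -> R).

Definition agree s phi phi0 := forall y, y \notin s -> phi y = phi0 y.

Lemma iint_ge0 s f phi : (forall p, 0 <= f p) -> 0 <= iint s f phi.
Proof.
move=> f0; elim: s phi => [|x s IH] phi /=; first exact: f0.
by apply: integral_ge0 => t _; exact: IH.
Qed.

Lemma iint_le s f g phi0 : (forall p, 0 <= f p) ->
  (forall p, agree s p phi0 -> f p <= g p) -> iint s f phi0 <= iint s g phi0.
Proof.
move=> f0; elim: s phi0 => [|x s IH] phi0 fg /=.
  by apply: fg => y.
apply: int_le => [t|t]; first exact: iint_ge0.
apply: IH => p ap; apply: fg => y; rewrite in_cons negb_or => /andP[yx ys].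
by rewrite ap // /upd (negbTE yx).
Qed.

Lemma iint_scale s f phi (k : R) : (0 <= k)%R -> (forall p, 0 <= f p) ->
  iint s (fun p => k%:E * f p) phi = k%:E * iint s f phi.
Proof.
move=> k0 f0; elim: s phi => [|x s IH] phi //=.
under eq_integral do rewrite IH.
by rewrite int_scale // => t; exact: iint_ge0.
Qed.

Lemma iint0 s phi : iint s (fun _ => 0) phi = 0.
Proof.
elim: s phi => [|x s IH] phi //=.
under eq_integral do rewrite IH.
by rewrite integral0.
Qed.

Lemma iint_aff s f phi0 (lam : R) (th : site d -> R) : (0 < lam)%R ->
  (forall p, 0 <= f p) ->
  iint s (fun p => f (fun y => lam * p y + th y)%R) phi0 =
  ((lam^-1) ^+ size s)%:E * iint s f (fun y => lam * phi0 y + th y)%R.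
Proof.
move=> l0 f0; elim: s phi0 => [|x s IH] phi0 /=; first by rewrite expr0 mul1e.
under eq_integral => t _.
  rewrite IH.
  have -> : (fun y => lam * upd phi0 x t y + th y)%R =
    upd (fun y => lam * phi0 y + th y)%R x (lam * t + th x)%R.
    by apply/funext => y; rewrite /upd; case: eqP => // ->.
  over.
rewrite int_scale; first last.
- by move=> t; exact: iint_ge0.
- by rewrite exprn_ge0 // invr_ge0 ltW.
rewrite (int_aff (fun v => iint s f (upd (fun y => lam * phi0 y + th y)%R x v))) //;
  last by move=> t; exact: iint_ge0.
by rewrite muleA -EFinM exprSr.
Qed.
End Iint.
Section Comb.
Context {d : nat}.
Implicit Types (x y : site d) (L : {fset site d}).

Lemma nn_sym x y : nn x y = nn y x.
Proof. by rewrite /nn; congr (_ == _); apply: eq_bigr => i _; rewrite distnC. Qed.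

Lemma nn_nbrs x y : nn x y -> y \in nbrs x.
Proof.
rewrite /nn => /eqP H.
case: (pickP (fun i : 'I_d => `|x ord0 i - y ord0 i|%N != 0%N)) => [i gi|Hn]; last first.
  by move: H; rewrite big1 // => i _; apply/eqP/negbNE; rewrite Hn.
move: H; rewrite (bigD1 i) //= => H.
have gi1 : `|x ord0 i - y ord0 i|%N = 1%N by move: gi H; case: (`|_|%N) => // [[|]] //=.
have g0 : forall j, j != i -> x ord0 j = y ord0 j.
  move=> j ji; apply/eqP; rewrite -subr_eq0 -absz_eq0; apply/eqP.
  move: H; rewrite gi1 add1n => /eqP; rewrite eqSS => /eqP/esym.
  move=> H2; move: (esym H2) => /eqP; rewrite sum_nat_eq0 => /forallP/(_ j); by rewrite ji /= => /eqP.
rewrite /nbrs mem_cat; apply/orP.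
have [xi|xi] : x ord0 i - y ord0 i = 1 \/ x ord0 i - y ord0 i = -1.
  by move: gi1; case: (x ord0 i - y ord0 i) => [[|[|]]|[|]] //= _; [left|right].
- right; apply/mapP; exists i; first by rewrite mem_enum.
  apply/rowP => j; rewrite !mxE eqxx /=.
  have [->|ji] := eqVneq j i; first by rewrite /= -xi opprB addrC subrK.
  by rewrite /= subr0 (g0 j ji).
- left; apply/mapP; exists i; first by rewrite mem_enum.
  apply/rowP => j; rewrite !mxE eqxx /=.
  have [->|ji] := eqVneq j i.
    by rewrite /=; move: xi; lra.
  by rewrite /= addr0 (g0 j ji).
Qed.

Lemma in_bdry L y : (y \in bdry L) = (y \in flatten [seq nbrs x | x <- L]) && (y \notin L) && has (nn y) L.
Proof. by rewrite /bdry !inE andbA. Qed.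

Lemma bdry_notin L y : y \in bdry L -> y \notin L.
Proof. by rewrite in_bdry => /andP[/andP[]]. Qed.

Lemma nn_clos L x y : x \in L -> nn x y -> y \in clos L.
Proof.
move=> xL nxy; rewrite /clos in_fsetU; case yL: (y \in L) => //=.
rewrite in_bdry yL andbT; apply/andP; split.
  by apply/flatten_mapP; exists x => //; exact: nn_nbrs.
by apply/hasP; exists x => //; rewrite nn_sym.
Qed.

Lemma perm_clos L : perm_eq (enum_fset (clos L)) (enum_fset L ++ enum_fset (bdry L)).
Proof.
apply: uniq_perm; first exact: fset_uniq.
  rewrite cat_uniq !fset_uniq /= andbT; apply/hasPn => y /bdry_notin.
  by [].
by move=> y; rewrite mem_cat /clos in_fsetU.
Qed.

Lemma sum_clos (R : pzRingType) L (P : pred (site d)) (F : site d -> R) :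
  \sum_(y <- clos L | P y) F y = \sum_(y <- L | P y) F y + \sum_(y <- bdry L | P y) F y.
Proof. by rewrite (perm_big _ (perm_clos L)) big_cat. Qed.

Lemma dotZB (R : realType) x y (u : 'rV[R]_d) : dotZ (x - y) u = dotZ x u - dotZ y u.
Proof.
rewrite /dotZ -sumrB; apply: eq_bigr => i _.
by rewrite !mxE intrB mulrBl.
Qed.

Lemma dotZD (R : realType) x y (u : 'rV[R]_d) : dotZ (x + y) u = dotZ x u + dotZ y u.
Proof.
rewrite /dotZ -big_split; apply: eq_bigr => i _.
by rewrite !mxE intrD mulrDl.
Qed.

Lemma cross0 (R : realType) (u : 'rV[R]_d) L x : x \in L ->
  \sum_(y <- clos L | nn x y) dotZ (x - y) u = 0.
Proof.
move=> xL.
set r := [seq y <- enum_fset (clos L) | nn x y].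
have -> : \sum_(y <- clos L | nn x y) dotZ (x - y) u = \sum_(y <- r) dotZ (x - y) u.
  by rewrite big_filter.
pose f := fun y : site d => x + x - y.
have fK : involutive f by move=> y; rewrite /f opprB addrC subrK.
have fr : forall y, y \in r -> f y \in r.
  move=> y; rewrite !mem_filter => /andP[nxy _].
  have nf : nn x (f y).
    move: nxy; rewrite /nn.
    suff -> : (\sum_(i < d) `|x ord0 i - f y ord0 i|%N)%N =
              (\sum_(i < d) `|x ord0 i - y ord0 i|%N)%N by [].
    apply: eq_bigr => i _; rewrite /f !mxE -abszN; congr (`|_|%N); ring.
  by rewrite nf /=; exact: nn_clos xL nf.
have pr : perm_eq r (map f r).
  apply: uniq_perm.
  - by rewrite filter_uniq // fset_uniq.
  - by rewrite (map_inj_uniq (can_inj fK)) filter_uniq // fset_uniq.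
  move=> y; apply/idP/idP => [yr|/mapP[z zr ->]]; last exact: fr.
  by apply/mapP; exists (f y); [exact: fr|rewrite fK].
have : \sum_(y <- r) dotZ (x - y) u = - \sum_(y <- r) dotZ (x - y) u.
  rewrite {1}(perm_big _ pr) big_map -sumrN; apply: eq_bigr => y _.
  by rewrite /f !dotZB dotZD; ring.
move=> H; move: H; set S := \sum_(y <- r) _; lra.
Qed.
End Comb.

Section Alg.
Context {R : realType} {d : nat} (u : 'rV[R]_d) (L : {fset site d}).
Implicit Types (F : site d -> site d -> R) (p : site d -> R).
Local Notation a x y := (dotZ (x - y) u).

Definition SS (M N : {fset site d}) F := \sum_(x <- M) \sum_(y <- N | nn x y) F x y.
Definition Qf p := 2^-1 * SS L L (fun x y => (p x - p y) ^+ 2) + SS L (bdry L) (fun x y => p x ^+ 2).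
Definition Tu := 2^-1 * SS L L (fun x y => (a x y) ^+ 2) + SS L (bdry L) (fun x y => (a x y) ^+ 2).

Lemma exch M N F : SS M N F = SS N M (fun x y => F y x).
Proof.
rewrite /SS; under eq_bigr do rewrite big_mkcond.
rewrite exchange_big; apply: eq_bigr => y _; rewrite [RHS]big_mkcond; apply: eq_bigr => x _ /=.
by rewrite nn_sym.
Qed.

Lemma clos2 F : \sum_(x <- clos L) \sum_(y <- clos L | nn x y) F x y =
  SS L L F + SS L (bdry L) F + SS (bdry L) L F + SS (bdry L) (bdry L) F.
Proof.
rewrite (sum_clos _ L xpredT) /SS.
under eq_bigr do rewrite sum_clos.
under [X in _ + X]eq_bigr do rewrite sum_clos.
by rewrite !big_split /= !addrA.
Qed.

Lemma SS_lin M N F G : SS M N (fun x y => F x y + G x y) = SS M N F + SS M N G.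
Proof. by rewrite /SS -big_split; apply: eq_bigr => x _; rewrite big_split. Qed.
Lemma SS_scale M N (c : R) F : SS M N (fun x y => c * F x y) = c * SS M N F.
Proof. by rewrite /SS mulr_sumr; apply: eq_bigr => x _; rewrite mulr_sumr. Qed.
Lemma SS_ext M N F G : (forall x y, x \in M -> y \in N -> nn x y -> F x y = G x y) ->
  SS M N F = SS M N G.
Proof.
move=> FG; rewrite /SS big_seq [RHS]big_seq; apply: eq_bigr => x xM.
rewrite big_seq_cond [RHS]big_seq_cond; apply: eq_bigr => y /andP[yN nxy].
exact: FG.
Qed.
Lemma SS_le M N F G : (forall x y, x \in M -> y \in N -> nn x y -> F x y <= G x y) ->
  SS M N F <= SS M N G.
Proof.
move=> FG; rewrite /SS big_seq [X in _ <= X]big_seq; apply: ler_sum => x xM.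
rewrite big_seq_cond [X in _ <= X]big_seq_cond; apply: ler_sum => y /andP[yN nxy].
exact: FG.
Qed.
Lemma SS_ge0 M N F : (forall x y, x \in M -> y \in N -> nn x y -> 0 <= F x y) ->
  0 <= SS M N F.
Proof.
move=> F0; have -> : 0 = SS M N (fun _ _ => 0).
  by rewrite /SS big1 // => x _; rewrite big1.
exact: SS_le.
Qed.

Lemma crossX p : SS L L (fun x y => (p x - p y) * a x y) + 2 * SS L (bdry L) (fun x y => p x * a x y) = 0.
Proof.
have H1 : SS L L (fun x y => (p x - p y) * a x y) = 2 * SS L L (fun x y => p x * a x y).
  have -> : SS L L (fun x y => (p x - p y) * a x y) =
      SS L L (fun x y => p x * a x y) + SS L L (fun x y => - (p y * a x y)).
    by rewrite -SS_lin; apply: SS_ext => x y _ _ _; rewrite mulrBl.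
  rewrite [X in _ + X]exch.
  have -> : SS L L (fun x y => - (p x * a y x)) = SS L L (fun x y => p x * a x y).
    by apply: SS_ext => x y _ _ _; rewrite !dotZB; ring.
  by rewrite mulr2n mulrDl mul1r.
rewrite H1 -mulrDr.
have -> : SS L L (fun x y => p x * a x y) + SS L (bdry L) (fun x y => p x * a x y) =
   \sum_(x <- L) p x * \sum_(y <- clos L | nn x y) a x y.
  rewrite /SS -big_split; apply: eq_bigr => x _.
  by rewrite sum_clos mulrDr !mulr_sumr.
rewrite big_seq big1 ?mulr0 // => x xL.
by rewrite cross0 // mulr0.
Qed.

Lemma E1 (phi : site d -> R) :
  2^-1 * SS L L (fun x y => (phi x - phi y) ^+ 2) +
  SS L (bdry L) (fun x y => (phi x - psiu u y) ^+ 2) =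
  Qf (fun y => phi y - psiu u y) + Tu.
Proof.
set p := fun y => phi y - psiu u y.
have e1 : SS L L (fun x y => (phi x - phi y) ^+ 2) =
  SS L L (fun x y => (p x - p y) ^+ 2) + SS L L (fun x y => (a x y) ^+ 2) +
  SS L L (fun x y => 2 * ((p x - p y) * a x y)).
  rewrite -!SS_lin; apply: SS_ext => x y _ _ _.
  by rewrite /p /psiu dotZB; ring.
have e2 : SS L (bdry L) (fun x y => (phi x - psiu u y) ^+ 2) =
  SS L (bdry L) (fun x y => p x ^+ 2) + SS L (bdry L) (fun x y => (a x y) ^+ 2) +
  SS L (bdry L) (fun x y => 2 * (p x * a x y)).
  rewrite -!SS_lin; apply: SS_ext => x y _ _ _.
  by rewrite /p /psiu dotZB; ring.
rewrite e1 e2 !SS_scale /Qf /Tu.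
move: (crossX p); lra.
Qed.

Lemma E2 (phi : site d -> R) : (forall y, y \notin L -> phi y = psiu u y) ->
  \sum_(x <- clos L) \sum_(y <- clos L | nn x y) (phi x - phi y - a x y) ^+ 2 =
  2 * Qf (fun y => phi y - psiu u y).
Proof.
move=> off; set p := fun y => phi y - psiu u y.
have p0 : forall y, y \in bdry L -> p y = 0.
  by move=> y /bdry_notin /off; rewrite /p => ->; rewrite subrr.
have eqp : forall x y, (phi x - phi y - a x y) = p x - p y.
  by move=> x y; rewrite /p /psiu dotZB; ring.
rewrite clos2.
rewrite (@SS_ext L L _ (fun x y => (p x - p y) ^+ 2)); last by move=> x y *; rewrite eqp.
rewrite (@SS_ext L (bdry L) _ (fun x y => p x ^+ 2)); last first.
  by move=> x y _ yb _; rewrite eqp (p0 y) // subr0.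
rewrite (@SS_ext (bdry L) L _ (fun x y => p y ^+ 2)); last first.
  by move=> x y xb _ _; rewrite eqp (p0 x) // sub0r sqrrN.
rewrite (@SS_ext (bdry L) (bdry L) _ (fun x y => 0)); last first.
  by move=> x y xb yb _; rewrite eqp (p0 x) // (p0 y) // subr0 expr0n.
have -> : SS (bdry L) L (fun x y => p y ^+ 2) = SS L (bdry L) (fun x y => p x ^+ 2).
  by rewrite [RHS]exch.
have -> : SS (bdry L) (bdry L) (fun _ _ => 0 : R) = 0.
  by rewrite /SS big1 // => x _; rewrite big1.
rewrite /Qf; lra.
Qed.

Lemma SS_lin2 M N (c : R) F G : SS M N (fun x y => c * F x y - G x y) = c * SS M N F - SS M N G.
Proof.
rewrite /SS mulr_sumr -sumrB; apply: eq_bigr => x _.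
by rewrite mulr_sumr -sumrB.
Qed.

Lemma Qf_scale (lam : R) p : Qf (fun y => lam * p y + 0) = lam ^+ 2 * Qf p.
Proof.
rewrite /Qf (SS_ext L L _ (fun x y => lam ^+ 2 * (p x - p y) ^+ 2)); last by move=> *; ring.
rewrite (SS_ext L (bdry L) _ (fun x y => lam ^+ 2 * p x ^+ 2)); last by move=> *; ring.
rewrite !SS_scale; ring.
Qed.
End Alg.

Lemma lne_le {R : realType} (x : \bar R) (X : R) : 0 < X -> (x <= X%:E)%E -> (lne x <= (ln X)%:E)%E.
Proof.
move=> X0; case: x => [r||] //= rX.
- case: ifPn => [_|]; first exact: leNye.
  rewrite -ltNge => r0; rewrite lee_fin ler_ln // ?posrE //.
- exact: leNye.
Qed.

Theorem lemma4p1 (R : realType) (d : nat) (u : 'rV[R]_d) (A C2 : R)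
  (Omega : Type)
  (V : Omega -> site d -> site d -> R -> R) (B : Omega -> site d -> site d -> R) :
  0 < A -> 0 < C2 ->
  (forall w x y, V w x y = V w y x) ->
  (forall w x y, B w x y = B w y x) ->
  (forall w x y, nn x y -> isC2 (V w x y) /\ is_even (V w x y)) ->
  exists beta0 : R, 0 < beta0 /\
  forall beta : R, 0 < beta < beta0 ->
  forall (L : {fset site d}) (w : Omega),
  (forall x y, nn x y -> forall s : R,
      A * s ^+ 2 - B w x y <= V w x y s <= C2 * s ^+ 2) ->
  (Ffree beta u L (V w) <=
   (- (#|` L|%:R) * (sigmaL (A - beta) L - sigmaL C2 L)
    + \sum_(x <- clos L) \sum_(y <- clos L | nn x y) B w x y
    - (A - beta - C2) / 2 *
        \sum_(x <- clos L) \sum_(y <- clos L | nn x y) (dotZ (x - y) u) ^+ 2)%:E)%E.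
Proof.
move=> A0 C20 Vsym Bsym _.
exists A; split => // beta /andP[b0 bA] L w hb.
set psi := psiu u.
set s := enum_fset L.
set n := size s.
have B0 : forall x y, nn x y -> 0 <= B w x y.
  move=> x y nxy; have := hb x y nxy 0; rewrite expr0n /= !mulr0 sub0r => /andP[h1 h2].
  by rewrite -oppr_le0; exact: le_trans h1 h2.
set E := fun phi : site d -> R => 2^-1 * SS L L (fun x y => (phi x - phi y) ^+ 2) +
   SS L (bdry L) (fun x y => (phi x - psi y) ^+ 2).
set B1 := 2^-1 * SS L L (fun x y => B w x y) + SS L (bdry L) (fun x y => B w x y).
have HamE : forall phi, Ham (V w) L psi phi =
    2^-1 * SS L L (fun x y => V w x y (phi x - phi y)) +
    SS L (bdry L) (fun x y => V w x y (phi x - psi y)) by [].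
have Hlow : forall phi, A * E phi - B1 <= Ham (V w) L psi phi.
  move=> phi; rewrite HamE /E /B1.
  have l1 : SS L L (fun x y => A * (phi x - phi y) ^+ 2 - B w x y) <=
            SS L L (fun x y => V w x y (phi x - phi y)).
    by apply: SS_le => x y _ _ nxy; case/andP: (hb x y nxy (phi x - phi y)).
  have l2 : SS L (bdry L) (fun x y => A * (phi x - psi y) ^+ 2 - B w x y) <=
            SS L (bdry L) (fun x y => V w x y (phi x - psi y)).
    by apply: SS_le => x y _ _ nxy; case/andP: (hb x y nxy (phi x - psi y)).
  move: l1 l2; rewrite !SS_lin2; lra.
have Hup : forall phi, Ham (V w) L psi phi <= C2 * E phi.
  move=> phi; rewrite HamE /E.
  have l1 : SS L L (fun x y => V w x y (phi x - phi y)) <=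
            SS L L (fun x y => C2 * (phi x - phi y) ^+ 2).
    by apply: SS_le => x y _ _ nxy; case/andP: (hb x y nxy (phi x - phi y)).
  have l2 : SS L (bdry L) (fun x y => V w x y (phi x - psi y)) <=
            SS L (bdry L) (fun x y => C2 * (phi x - psi y) ^+ 2).
    by apply: SS_le => x y _ _ nxy; case/andP: (hb x y nxy (phi x - psi y)).
  move: l1 l2; rewrite !SS_scale; lra.
set gfun := fun phi : site d -> R => expR (beta / 2 * \sum_(x <- clos L)
   \sum_(y <- clos L | nn x y) (phi x - phi y - dotZ (x - y) u) ^+ 2).
set Jc := fun c : R => iint s (fun p => (expR (- (c * Qf L p)))%:E) (fun _ => 0).
set J1 := Jc 1.
have Jd : forall c : R, 0 < c -> Jc c = ((((Num.sqrt c)^-1) ^+ n)%:E * J1)%E.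
  move=> c c0; rewrite /Jc.
  pose f := fun q : site d -> R => (expR (- (1 * Qf L q)))%:E.
  have f0 : forall p, (0 <= f p)%E by move=> p; rewrite lee_fin expR_ge0.
  have sc : 0 < Num.sqrt c by rewrite sqrtr_gt0.
  have e := @iint_aff R d s f (fun _ => 0) (Num.sqrt c) (fun _ => 0) sc f0.
  transitivity (iint s (fun p => f (fun y => Num.sqrt c * p y + (fun _ => 0) y)) (fun _ => 0)).
    congr iint; apply/funext => p; rewrite /f /= Qf_scale sqr_sqrtr ?ltW // mul1r.
    by [].
  rewrite e; congr (_ * _)%E; rewrite /J1 /Jc; congr iint; apply/funext => y.
  by rewrite mulr0 addr0.
have Jsh : forall c, iint s (fun phi => (expR (- (c * Qf L (fun y => phi y - psi y))))%:E) psi = Jc c.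
  move=> c.
  pose f := fun q : site d -> R => (expR (- (c * Qf L q)))%:E.
  have f0 : forall p, (0 <= f p)%E by move=> p; rewrite lee_fin expR_ge0.
  have e := @iint_aff R d s f psi 1 (fun y => - psi y) ltr01 f0.
  transitivity (iint s (fun p => f (fun y => 1 * p y + (fun y => - psi y) y)) psi).
    congr iint; apply/funext => p; rewrite /f /=.
    by congr (expR (- (c * Qf L _)))%:E; apply/funext => y; rewrite mul1r.
  rewrite e invr1 expr1n mul1e; rewrite /Jc; congr iint; apply/funext => y.
  by rewrite mul1r subrr.
have R1 : forall phi, agree s phi psi -> expR (- Ham (V w) L psi phi) * gfun phi <=
    expR (B1 - A * Tu u L) * expR (- ((A - beta) * Qf L (fun y => phi y - psi y))).
  move=> phi ag.
  have off : forall y, y \notin L -> phi y = psiu u y by move=> y yL; exact: ag.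
  rewrite /gfun E2 // -!expRD ler_expR.
  have := Hlow phi; rewrite /E E1; lra.
have R2 : forall phi, expR (- (C2 * Tu u L)) * expR (- (C2 * Qf L (fun y => phi y - psi y)))
    <= expR (- Ham (V w) L psi phi).
  move=> phi; rewrite -expRD ler_expR.
  have := Hup phi; rewrite /E E1; lra.
have R3 : forall phi, expR (- Ham (V w) L psi phi) <=
    expR (B1 - A * Tu u L) * expR (- (A * Qf L (fun y => phi y - psi y))).
  move=> phi; rewrite -expRD ler_expR.
  have := Hlow phi; rewrite /E E1; lra.
set Z := Zpart (V w) L psi.
have ZE : Z = iint s (fun phi => (expR (- Ham (V w) L psi phi))%:E) psi by [].
have Z0 : (0 <= Z)%E by rewrite ZE; apply: iint_ge0 => p; rewrite lee_fin expR_ge0.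
have Zlow : ((expR (- (C2 * Tu u L)))%:E * Jc C2 <= Z)%E.
  rewrite -Jsh -iint_scale ?expR_ge0 //; try by move=> p; rewrite lee_fin expR_ge0.
  rewrite ZE; apply: iint_le => [p|p _]; first by rewrite -EFinM lee_fin mulr_ge0 ?expR_ge0.
  by rewrite -EFinM lee_fin; exact: R2.
have Zup : (Z <= (expR (B1 - A * Tu u L))%:E * Jc A)%E.
  rewrite -Jsh -iint_scale ?expR_ge0 //; try by move=> p; rewrite lee_fin expR_ge0.
  rewrite ZE; apply: iint_le => [p|p _]; first by rewrite lee_fin expR_ge0.
  by rewrite -EFinM lee_fin; exact: R3.
have Nup : (iint s (fun phi => (expR (- Ham (V w) L psi phi) * gfun phi)%:E) psi <=
    (expR (B1 - A * Tu u L))%:E * Jc (A - beta)%R)%E.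
  rewrite -Jsh -iint_scale ?expR_ge0 //; try by move=> p; rewrite lee_fin expR_ge0.
  apply: iint_le => [p|p ag]; first by rewrite lee_fin mulr_ge0 ?expR_ge0.
  by rewrite -EFinM lee_fin; exact: R1.
have FE : Ffree beta u L (V w) = lne (iint s (fun phi =>
   ((expR (- Ham (V w) L psi phi) / fine Z) * gfun phi)%:E) psi) by [].
rewrite FE.
have [z0|zn0] := eqVneq (fine Z) 0.
  rewrite z0.
  have -> : (fun phi => ((expR (- Ham (V w) L psi phi) / 0) * gfun phi)%:E) = (fun _ => 0%E).
    by apply/funext => p; rewrite invr0 mulr0 mul0r.
  by rewrite iint0 le0_lneNy // leNye.
have zpos : 0 < fine Z by rewrite lt_neqAle eq_sym zn0 fine_ge0.
have Zfin : Z \is a fin_num.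
  rewrite fin_numE; apply/andP; split.
    by rewrite gt_eqF // (lt_le_trans _ Z0) // ltNy0.
  by apply: contra zn0 => /eqP ->.
set z := fine Z.
have Zz : Z = z%:E by rewrite /z fineK.
have r_gt0 : forall c : R, 0 < c -> 0 < (Num.sqrt c)^-1 ^+ n.
  move=> c c0; have sc : 0 < (Num.sqrt c)^-1 by rewrite invr_gt0 sqrtr_gt0.
  exact: (@exprn_gt0 R n _ sc).
have J10 : (0 <= J1)%E by apply: iint_ge0 => p; rewrite lee_fin expR_ge0.
have J1fin : J1 \is a fin_num.
  rewrite fin_numE; apply/andP; split.
    by rewrite gt_eqF // (lt_le_trans _ J10) // ltNy0.
  apply/negP => /eqP Jinf; move: Zlow; rewrite Jd // Jinf Zz.
  rewrite gt0_muley ?lte_fin ?r_gt0 // gt0_muley ?lte_fin ?expR_gt0 //.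
set j := fine J1.
have J1j : J1 = j%:E by rewrite /j fineK.
have jpos : 0 < j.
  have j0 : 0 <= j by rewrite /j fine_ge0.
  rewrite lt_neqAle j0 andbT; apply/eqP => j0'.
  move: Zup; rewrite Jd // J1j -j0' mule0 mule0 Zz lee_fin => zle.
  by move: zpos; rewrite ltNge zle.
have GE : iint s (fun phi => ((expR (- Ham (V w) L psi phi) / z) * gfun phi)%:E) psi =
    ((z^-1)%:E * iint s (fun phi => (expR (- Ham (V w) L psi phi) * gfun phi)%:E) psi)%E.
  rewrite -iint_scale ?invr_ge0 ?ltW //; last by move=> p; rewrite lee_fin mulr_ge0 ?expR_ge0.
  by congr iint; apply/funext => p; rewrite -EFinM; congr EFin; rewrite mulrAC mulrC.
rewrite GE.
set K1 := expR (B1 - A * Tu u L).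
set r1 := (Num.sqrt (A - beta))^-1 ^+ n.
set r2 := (Num.sqrt C2)^-1 ^+ n.
have r1p : 0 < r1 by apply: r_gt0; rewrite subr_gt0.
have r2p : 0 < r2 by apply: r_gt0.
have K1p : 0 < K1 by rewrite expR_gt0.
have Nb : ((z^-1)%:E * iint s (fun phi => (expR (- Ham (V w) L psi phi) * gfun phi)%:E) psi
    <= (z^-1 * (K1 * (r1 * j)))%:E)%E.
  rewrite EFinM; apply: lee_wpmul2l; first by rewrite lee_fin invr_ge0 ltW.
  apply: (le_trans Nup); rewrite Jd ?subr_gt0 // J1j -!EFinM.
  by [].
apply: (le_trans (lne_le _ _ _ Nb)); first by rewrite !mulr_gt0 // invr_gt0.
rewrite lee_fin.
have lz : - (C2 * Tu u L) + ln r2 + ln j <= ln z.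
  have : (expR (- (C2 * Tu u L)) * (r2 * j)) <= z.
    by move: Zlow; rewrite Jd // J1j Zz -!EFinM lee_fin.
  rewrite -ler_ln ?posrE ?mulr_gt0 ?expR_gt0 //.
  by rewrite !lnM ?posrE ?mulr_gt0 ?expR_gt0 // expRK addrA.
rewrite !lnM ?posrE ?mulr_gt0 ?invr_gt0 ?expR_gt0 // lnV ?posrE // /K1 expRK.
have sigE : forall c : R, 0 < c -> sigmaL c L = - (n%:R)^-1 * (ln ((Num.sqrt c)^-1 ^+ n) + ln j).
  move=> c c0; rewrite /sigmaL -lnM ?posrE ?r_gt0 //.
  set I := intL L (fun _ => 0) _.
  suff -> : I = ((Num.sqrt c)^-1 ^+ n * j)%:E by [].
  rewrite EFinM -J1j -Jd // /Jc /intL; congr iint; apply/funext => p.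
  by rewrite /Qf /SS; congr (expR _)%:E; ring.
rewrite (sigE _ C20) (sigE (A - beta)) ?subr_gt0 // -/r1 -/r2.
have nn1 : n%:R * (n%:R)^-1 * (ln r1 - ln r2) = ln r1 - ln r2 :> R.
  have [n0|n0] := eqVneq n 0%N.
    by rewrite /r1 /r2 n0 !expr0 ln1 subrr mulr0.
  by rewrite mulfV ?mul1r // pnatr_eq0.
have key : B1 + (C2 - A) * Tu u L <=
    \sum_(x <- clos L) \sum_(y <- clos L | nn x y) B w x y -
    (A - beta - C2) / 2 * \sum_(x <- clos L) \sum_(y <- clos L | nn x y) (dotZ (x - y) u) ^+ 2.
  rewrite (clos2 L (fun x y => B w x y)) (clos2 L (fun x y => (dotZ (x - y) u) ^+ 2)).
  rewrite /B1 /Tu.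
  set b1 := SS L L _; set b2 := SS L (bdry L) _; set b3 := SS (bdry L) L _;
  set b4 := SS (bdry L) (bdry L) _.
  set a1 := SS L L _; set a2 := SS L (bdry L) _; set a3 := SS (bdry L) L _;
  set a4 := SS (bdry L) (bdry L) _.
  have a32 : a3 = a2.
    by rewrite /a3 exch; apply: SS_ext => x y _ _ _; rewrite !dotZB; ring.
  have Bge : forall M N, 0 <= SS M N (fun x y => B w x y).
    by move=> M N; apply: SS_ge0 => x y _ _ nxy; exact: B0.
  have age : forall M N, 0 <= SS M N (fun x y => (dotZ (x - y) u) ^+ 2).
    by move=> M N; apply: SS_ge0 => x y _ _ _; exact: sqr_ge0.
  have b10 : 0 <= b1 by exact: Bge.
  have b20 : 0 <= b2 by exact: Bge.
  have b30 : 0 <= b3 by exact: Bge.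
  have b40 : 0 <= b4 by exact: Bge.
  have a10 : 0 <= a1 by exact: age.
  have a20 : 0 <= a2 by exact: age.
  have a40 : 0 <= a4 by exact: age.
  have hbs : 0 <= beta * (a1 + a2 + a2 + a4) by apply: mulr_ge0; [exact: ltW|lra].
  have hA : A <= C2 \/ a4 = 0.
    case: (pselect (exists x y : site d, nn x y)) => [[x [y nxy]]|nonn].
    - left; rewrite leNgt; apply/negP => CA.
      set b := B w x y; have bb0 : 0 <= b := B0 x y nxy.
      have D0 : 0 < A - C2 by rewrite subr_gt0.
      pose t := b / (A - C2) + 1.
      have Dt : (A - C2) * t = b + (A - C2) by rewrite /t; field; rewrite gt_eqF.
      have t1 : 1 <= t by rewrite /t lerDr divr_ge0 // ltW.
      have := hb x y nxy t => /andP[h1 h3].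
      have tt : t <= t ^+ 2 by rewrite expr2 ler_peMl // (le_trans ler01 t1).
      have : (A - C2) * t <= (A - C2) * t ^+ 2 by rewrite ler_pM2l.
      move: h1 h3; rewrite -/b; clearbody t b; move=> h1 h3 h2; lra.
    - right; rewrite /a4 (SS_ext _ _ _ (fun _ _ => 0)); last first.
        by move=> x y _ _ nxy; exfalso; apply: nonn; exists x, y.
      by rewrite /SS big1 // => x _; rewrite big1.
  rewrite a32; case: hA => [hA|->].
  - have : 0 <= (C2 - A) * a4 by rewrite mulr_ge0 // subr_ge0.
    move: hbs; nra.
  - move: hbs; nra.
move: nn1 lz key; set ni := (n%:R)^-1; set nr := n%:R.
set X1 := ln r1; set X2 := ln r2; set lj := ln j; set lzz := ln z.
set SB := \sum_(x <- clos L) _; set SA := \sum_(x <- clos L) _.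
move=> nn1 lz key.
have e : - nr * (- ni * (X1 + lj) - - ni * (X2 + lj)) = nr * ni * (X1 - X2) by ring.
rewrite e nn1; lra.
Qed.
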